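(* Let $\mathcal{A}$ be a unital algebra over a field $F$ with $\operatorname{char}(F)\neq2$ and let $f\in\operatorname{QJDer}(\mathcal{A})$. Then $f\in\operatorname{JCent}(\mathcal{A})+\operatorname{JDer}(\mathcal{A})$ if and only if $f(1)\in Z_J(\mathcal{A})$.
   Context: $x\circ y=xy+yx$, $[x,y]=xy-yx$. $\operatorname{QJDer}(\mathcal{A})$: linear $f:\mathcal{A}\to\mathcal{A}$ for which there is a linear $h$ with $f(x)\circ y+x\circ f(y)=h(x\circ y)$ for all $x,y$. $\operatorname{JCent}(\mathcal{A})$: linear $f$ with $f(x\circ y)=f(x)\circ y$ for all $x,y$. $\operatorname{JDer}(\mathcal{A})$: linear $d$ with $d(x\circ y)=d(x)\circ y+x\circ d(y)$ for all $x,y$. $Z_J(\mathcal{A})=\{a: [[a,x],y]=0\ \forall x,y\in\mathcal{A}\}$. Sums of sets of maps are sets of pointwise sums. *)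

(* Defs.v *)
From HB Require Import structures.
From mathcomp Require Import all_boot all_order all_algebra.
Set Implicit Arguments. Unset Strict Implicit. Unset Printing Implicit Defensive.
Import GRing.Theory.
Local Open Scope ring_scope.

Section Jordan.
Variables (F : fieldType) (A : algType F).

Definition jprod (x y : A) : A := x * y + y * x.
Definition comm (x y : A) : A := x * y - y * x.

Definition is_lin (f : A -> A) : Prop :=
  forall (a : F) (x y : A), f (a *: x + y) = a *: f x + f y.

Definition QJDer (f : A -> A) : Prop :=
  is_lin f /\ exists h : A -> A, is_lin h /\
    forall x y, jprod (f x) y + jprod x (f y) = h (jprod x y).

Definition JCent (f : A -> A) : Prop :=
  is_lin f /\ forall x y, f (jprod x y) = jprod (f x) y.

Definition JDer (d : A -> A) : Prop :=
  is_lin d /\ forall x y, d (jprod x y) = jprod (d x) y + jprod x (d y).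

Definition ZJ (a : A) : Prop := forall x y, comm (comm a x) y = 0.

Definition in_JCent_plus_JDer (f : A -> A) : Prop :=
  exists g d : A -> A, JCent g /\ JDer d /\ forall x, f x = g x + d x.

End Jordan.

(* Main.v *)
Require Import Defs.
From HB Require Import structures.
From mathcomp Require Import all_boot all_order all_algebra.
Import GRing.Theory.
Local Open Scope ring_scope.

Set Implicit Arguments.
Section H.
Variables (F : fieldType) (A : algType F).

Lemma I1 (a x y : A) :
  jprod a (jprod x y) - jprod (jprod a x) y = comm (comm a y) x.
Proof.
rewrite /jprod /comm !(mulrDl, mulrDr, mulrBl, mulrBr, mulNr, mulrN) !mulrA.
rewrite !opprD !opprK !addrA.
by rewrite [LHS](ACl (((1*5)*(4*8))*2*7*6*3)) /= !subrr !add0r.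
Qed.

Lemma jC (x y : A) : jprod x y = jprod y x.
Proof. by rewrite /jprod addrC. Qed.

Lemma j1 (y : A) : jprod 1 y = y + y.
Proof. by rewrite /jprod mul1r mulr1. Qed.

Lemma jDl (x y z : A) : jprod (x + y) z = jprod x z + jprod y z.
Proof.
rewrite /jprod mulrDl mulrDr.
by rewrite addrACA.
Qed.

Lemma jDr (x y z : A) : jprod z (x + y) = jprod z x + jprod z y.
Proof. by rewrite !(jC z) jDl. Qed.

Lemma jBl (x y z : A) : jprod (x - y) z = jprod x z - jprod y z.
Proof. by rewrite /jprod mulrBl mulrBr opprD addrACA. Qed.

Lemma jBr (x y z : A) : jprod z (x - y) = jprod z x - jprod z y.
Proof. by rewrite !(jC z) jBl. Qed.

Lemma jZl (c : F) (x z : A) : jprod (c *: x) z = c *: jprod x z.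
Proof. by rewrite /jprod -scalerAl -scalerAr scalerDr. Qed.

Lemma jZr (c : F) (x z : A) : jprod z (c *: x) = c *: jprod z x.
Proof. by rewrite !(jC z) jZl. Qed.

Lemma lin0 (f : A -> A) : is_lin f -> f 0 = 0.
Proof.
move=> hf; have := hf 1 0 0; rewrite !scale1r addr0 => H.
by apply: (@addrI _ (f 0)); rewrite addr0 -H.
Qed.

Lemma linD (f : A -> A) : is_lin f -> forall x y, f (x + y) = f x + f y.
Proof. by move=> hf x y; rewrite -{1}(scale1r x) hf scale1r. Qed.

Lemma linZ (f : A -> A) : is_lin f -> forall c x, f (c *: x) = c *: f x.
Proof. by move=> hf c x; rewrite -(addr0 (c *: x)) hf lin0 // addr0. Qed.

Lemma linB (f : A -> A) : is_lin f -> forall x y, f (x - y) = f x - f y.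
Proof.
move=> hf x y; have -> : x - y = (-1) *: y + x by rewrite scaleN1r addrC.
by rewrite hf scaleN1r addrC.
Qed.

Lemma half_cancel (hF : (2%:R : F) != 0) (u v : A) : u + u = v + v -> u = v.
Proof.
move=> /eqP; rewrite -subr_eq0 => /eqP H.
have H2 : (2%:R : F) *: (u - v) = 0.
  by rewrite scaler_nat mulr2n -H opprD !addrA [LHS](ACl (1*3*2*4)).
apply/eqP; rewrite -subr_eq0; apply/eqP.
by rewrite -[u - v]scale1r -(mulVf hF) -scalerA H2 scaler0.
Qed.

Lemma half_sum (hF : (2%:R : F) != 0) (z : A) :
  (2%:R^-1 : F) *: z + (2%:R^-1 : F) *: z = z.
Proof.
have E : (2%:R^-1 : F) + 2%:R^-1 = 1.
  by rewrite -[RHS](mulVf hF) [X in _ = _ * X]mulr2n mulrDr mulr1.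
by rewrite -scalerDl E scale1r.
Qed.

End H.
Unset Implicit Arguments.

Theorem lemma4p1 (F : fieldType) (A : algType F)
  (hF : (2%:R : F) != 0) (f : A -> A) (hf : QJDer f) :
  in_JCent_plus_JDer f <-> ZJ (f 1).
Proof.
case: hf => flin [h [hlin Hh]].
split.
- case=> g [d [[glin Hg] [[dlin Hd] Hfgd]]].
  have d1 : d 1 = 0.
    apply: (half_cancel A hF); rewrite addr0.
    have E := Hd 1 1.
    rewrite j1 (linD dlin) (jC A (d 1)) j1 in E.
    by apply: (@addrI _ (d 1 + d 1)); rewrite addr0 -E.
  have g2 : forall y, jprod (g 1) y = g y + g y.
    by move=> y; rewrite -Hg j1 (linD glin).
  move=> x y; rewrite Hfgd d1 addr0 -I1 g2.
  by rewrite g2 jDl -Hg jC Hg subrr.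
- move=> ZA.
  set a := f 1.
  pose g := fun z => (2%:R^-1 : F) *: jprod a z.
  have glin : is_lin g.
    move=> c x y; rewrite /g jDr jZr scalerDr !scalerA mulrC.
    by [].
  have gC : forall x y, g (jprod x y) = jprod (g x) y.
    move=> x y; rewrite /g jZl; congr (_ *: _).
    by apply/eqP; rewrite -subr_eq0 I1 ZA.
  have hy : forall y, h y = f y + g y.
    move=> y; apply: (half_cancel A hF).
    rewrite -(linD hlin) -j1 -Hh j1 -/a.
    rewrite -[jprod a y](half_sum A hF) -/(g y).
    by rewrite [RHS]addrACA addrC.
  exists g, (fun z => f z - g z); split; first by split.
  split; last by move=> x; rewrite addrC subrK.
  split.
    move=> c x y; rewrite flin glin scalerBr.
    by rewrite opprD !addrA [LHS](ACl (1*3*2*4)).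
  move=> x y.
  have Ef : f (jprod x y) = jprod (f x) y + jprod x (f y) - g (jprod x y).
    by rewrite Hh hy addrK.
  rewrite Ef jBl jBr -gC.
  have -> : jprod x (g y) = g (jprod x y) by rewrite jC -gC jC.
  by rewrite [RHS]addrACA addrA.
Qed.
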